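(* Let $G\le\mathrm{Homeo}_+(\mathbb{R})$ be finitely generated. Then every point of $\mathrm{crs}\,G$ lies in $J_1\cup J_2$ for some two-chain $\{J_1,J_2\}$ with $J_1,J_2\in\bigcup_{g\in G}\pi_0\operatorname{supp} g$. In particular, if $U\subseteq\mathbb{R}$ is a $G$-invariant set such that the restricted action $G|_U$ is Conradian, then $U\cap \mathrm{crs}\,G=\varnothing$.
   Context: For $g\in\mathrm{Homeo}_+(\mathbb{R})$, $\operatorname{supp} g=\mathbb{R}\setminus\mathrm{Fix}(g)$, $\operatorname{supp}G=\bigcup_{g\in G}\operatorname{supp} g$, and $\pi_0 X$ denotes the set of connected components of $X$. The crossed support $\mathrm{crs}\,G$ is the union of those components $J\in\pi_0\operatorname{supp} G$ which are not a connected component of $\operatorname{supp} g$ for any $g\in G$. A pair of open intervals $\{J_1,J_2\}$ is a two-chain if $J_1\cap J_2$ is a proper nonempty subinterval of both. For a group acting by order-preserving bijections on an ordered set $\Omega$, $f,g$ are crossed if there exist $u<w<v$ in $\Omega$ with $g^n(u)<w<f^n(v)$ for all $n\in\mathbb{Z}$ and $g^N(v)<w<f^N(u)$ for some $N\in\mathbb{Z}$; the action is Conradian if no two elements are crossed. *)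

(* Defs.v *)
From Stdlib Require Import Reals Lra ZArith List ClassicalEpsilon.
Open Scope R_scope.

Definition homeo_plus (g : R -> R) : Prop :=
  continuity g /\ (forall x y, x < y -> g x < g y) /\ (forall y, exists x, g x = y).

Definition finv (g : R -> R) (y : R) : R :=
  epsilon (inhabits 0) (fun x => g x = y).

Definition zpow (g : R -> R) (n : Z) : R -> R :=
  match n with
  | Z0 => fun x => x
  | Zpos p => fun x => Nat.iter (Pos.to_nat p) g x
  | Zneg p => fun x => Nat.iter (Pos.to_nat p) (finv g) x
  end.

Definition is_subgroup (G : (R -> R) -> Prop) : Prop :=
  (forall g, G g -> homeo_plus g) /\
  G (fun x => x) /\
  (forall f g, G f -> G g -> G (fun x => f (g x))) /\
  (forall g, G g -> exists h, G h /\ forall x, h (g x) = x /\ g (h x) = x).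

Inductive generated (S : list (R -> R)) : (R -> R) -> Prop :=
  | gen_id : generated S (fun x => x)
  | gen_base : forall s, In s S -> generated S s
  | gen_comp : forall f g, generated S f -> generated S g ->
      generated S (fun x => f (g x))
  | gen_inv : forall f h, generated S f ->
      (forall x, h (f x) = x /\ f (h x) = x) -> generated S h.

Definition fin_gen (G : (R -> R) -> Prop) : Prop :=
  exists S : list (R -> R), (forall s, In s S -> G s) /\
    (forall g, G g -> generated S g).

Definition supp (g : R -> R) (x : R) : Prop := g x <> x.
Definition suppG (G : (R -> R) -> Prop) (x : R) : Prop := exists g, G g /\ supp g x.

Definition is_interval (J : R -> Prop) : Prop :=
  forall a b c, J a -> J c -> a <= b <= c -> J b.
Definition is_open (J : R -> Prop) : Prop :=
  forall x, J x -> exists e, 0 < e /\ forall y, Rabs (y - x) < e -> J y.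
Definition open_interval (J : R -> Prop) : Prop := is_interval J /\ is_open J.

Definition is_component (X J : R -> Prop) : Prop :=
  (exists x, J x) /\ is_interval J /\ (forall x, J x -> X x) /\
  (forall K, is_interval K -> (forall x, K x -> X x) ->
     (exists x, K x /\ J x) -> forall x, K x -> J x).

Definition crs (G : (R -> R) -> Prop) (x : R) : Prop :=
  exists J, is_component (suppG G) J /\ J x /\
    ~ (exists g, G g /\ is_component (supp g) J).

Definition comp_of_elt (G : (R -> R) -> Prop) (J : R -> Prop) : Prop :=
  exists g, G g /\ is_component (supp g) J.

Definition two_chain (J1 J2 : R -> Prop) : Prop :=
  open_interval J1 /\ open_interval J2 /\
  (exists x, J1 x /\ J2 x) /\
  (exists x, J1 x /\ ~ J2 x) /\
  (exists x, J2 x /\ ~ J1 x).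

Definition invariant (G : (R -> R) -> Prop) (U : R -> Prop) : Prop :=
  forall g x, G g -> U x -> U (g x).

Definition crossed_on (U : R -> Prop) (f g : R -> R) : Prop :=
  exists u w v, U u /\ U w /\ U v /\ u < w < v /\
    (forall n : Z, zpow g n u < w < zpow f n v) /\
    (exists N : Z, zpow g N v < w < zpow f N u).

Definition conradian_on (G : (R -> R) -> Prop) (U : R -> Prop) : Prop :=
  forall f g, G f -> G g -> ~ crossed_on U f g.

(* Main.v *)
Require Import Defs.
From Stdlib Require Import Reals Lra Lia List Classical ClassicalEpsilon ZArith.
Open Scope R_scope.

Definition ceps (k : R -> R) : Prop :=
  forall z eps, eps > 0 -> exists alp, alp > 0 /\
    forall y, Rabs (y - z) < alp -> Rabs (k y - k z) < eps.

Lemma cont_ceps k : continuity k -> ceps k.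
Proof.
  intros Hc z eps He. destruct (Hc z eps He) as [alp [Ha H]].
  exists alp; split; auto. intros y Hy.
  destruct (Req_dec y z) as [->|Hne].
  - replace (k z - k z) with 0 by ring. rewrite Rabs_R0; lra.
  - apply (H y). split; [split; [exact I| auto] | exact Hy].
Qed.

Definition seg (X : R -> Prop) (x z : R) : Prop :=
  forall t, (x <= t <= z \/ z <= t <= x) -> X t.

Lemma seg_interval X x : is_interval (seg X x).
Proof.
  intros a b c Ha Hc Hb t Ht.
  destruct (Rle_dec x b); [apply Hc | apply Ha]; lra.
Qed.

Lemma seg_sub X x z : seg X x z -> X z.
Proof. intros H; apply H; lra. Qed.

Lemma seg_refl X x : X x -> seg X x x.
Proof. intros H t Ht. replace t with x by lra. auto. Qed.

Lemma seg_max X x K y z : is_interval K -> (forall t, K t -> X t) ->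
  K y -> seg X x y -> K z -> seg X x z.
Proof.
  intros HK HKX Hy Hs Hz t Ht.
  destruct (classic (x <= t <= y \/ y <= t <= x)) as [H|H].
  - apply Hs; auto.
  - apply HKX. destruct (Rle_dec y z).
    + apply (HK y t z); auto; lra.
    + apply (HK z t y); auto; lra.
Qed.

Lemma seg_component X x : X x -> is_component X (seg X x).
Proof.
  intros Hx. split; [exists x; apply seg_refl; auto|].
  split; [apply seg_interval|]. split; [intros t Ht; eapply seg_sub; eauto|].
  intros K HK HKX [y [Hy1 Hy2]] z Hz. apply (seg_max X x K y z); auto.
Qed.

Lemma seg_open X x : is_open X -> is_open (seg X x).
Proof.
  intros HX z Hz. destruct (HX z (seg_sub _ _ _ Hz)) as [e [He H]].
  exists e; split; auto. intros y Hy t Ht.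
  destruct (classic (x <= t <= z \/ z <= t <= x)) as [H1|H1].
  - apply Hz; auto.
  - apply H. apply Rabs_def2 in Hy. apply Rabs_def1; lra.
Qed.

Lemma comp_seg X J x : is_component X J -> J x -> forall z, J z <-> seg X x z.
Proof.
  intros [Hne [HI [HS HM]]] Hx z. split.
  - intros Hz t Ht. apply HS. destruct Ht; [apply (HI x t z) | apply (HI z t x)]; auto.
  - intros Hz. apply (HM (seg X x)); auto.
    + apply seg_interval.
    + intros; eapply seg_sub; eauto.
    + exists x; split; auto. apply seg_refl; auto.
Qed.

Lemma comp_ext X J K : is_component X J -> (forall z, J z <-> K z) -> is_component X K.
Proof.
  intros [[x Hx] [HI [HS HM]]] E. split; [exists x; apply E; auto|].
  split; [intros a b c Ha Hc Hb; apply E; apply (HI a b c); try apply E; auto|].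
  split; [intros t Ht; apply HS, E; auto|].
  intros K' HK HKX [y [Hy1 Hy2]] z Hz. apply E. apply (HM K'); auto.
  exists y; split; auto; apply E; auto.
Qed.

Lemma supp_open g : continuity g -> is_open (supp g).
Proof.
  intros Hc z Hz. unfold supp in *.
  set (d := Rabs (g z - z)).
  assert (Hd : d > 0) by (apply Rabs_pos_lt; intro; apply Hz; lra).
  destruct (cont_ceps g Hc z (d/2)) as [alp [Ha H]]; [lra|].
  exists (Rmin alp (d/2)). split; [apply Rmin_pos; lra|].
  intros y Hy Heq. pose proof (Rmin_l alp (d/2)). pose proof (Rmin_r alp (d/2)).
  specialize (H y ltac:(lra)). rewrite Heq in H.
  assert (d <= Rabs (y - g z) + Rabs (y - z)).
  { unfold d. replace (g z - z) with ((y - z) - (y - g z)) by ring.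
    eapply Rle_trans; [apply Rabs_triang|]. rewrite Rabs_Ropp. lra. }
  lra.
Qed.

Lemma fix_gen S g : generated S g -> forall y, (forall s, In s S -> s y = y) -> g y = y.
Proof.
  induction 1; intros y Hy; auto.
  - rewrite IHgenerated2; auto.
  - destruct (H0 y) as [_ _]. rewrite <- (IHgenerated y Hy) at 1. apply H0.
Qed.

Lemma exists_moving G S y : (forall g, G g -> generated S g) -> suppG G y ->
  exists s, In s S /\ s y <> y.
Proof.
  intros HG [g [Hg Hs]].
  destruct (classic (exists s, In s S /\ s y <> y)) as [H|H]; auto.
  exfalso. apply Hs. apply (fix_gen S); auto.
  intros s Hin. destruct (Req_dec (s y) y); auto. exfalso; eauto.
Qed.

Lemma maxel {A} (Rl : A -> A -> Prop)
  (Htr : forall a b c, Rl a b -> Rl b c -> Rl a c) (Hirr : forall a, ~ Rl a a) :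
  forall l a, In a l -> exists m, In m l /\ (a = m \/ Rl a m) /\
     forall b, In b l -> ~ Rl m b.
Proof.
  induction l as [|c l IH]; intros a Ha; [destruct Ha|].
  destruct (classic (exists a0, In a0 l /\ (a = a0 \/ Rl a a0))) as [[a0 [Hin Hle]]|Hno].
  - destruct (IH a0 Hin) as [m [Hm [Hle' Hmax]]].
    assert (Ham : a = m \/ Rl a m).
    { destruct Hle as [<-|H1]; destruct Hle' as [<-|H2]; eauto. }
    destruct (classic (Rl m c)) as [Hmc|Hmc].
    + exists c. split; [left; auto|]. split.
      * right. destruct Ham as [<-|H]; eauto.
      * intros b [<-|Hb]; [apply Hirr|]. intros Hcb. apply (Hmax b Hb). eauto.
    + exists m. split; [right; auto|]. split; auto.
      intros b [<-|Hb]; auto.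
  - destruct Ha as [->|Ha]; [|exfalso; apply Hno; eauto].
    exists a. split; [left; auto|]. split; [left; auto|].
    intros b [<-|Hb]; [apply Hirr|]. intros Hab. apply Hno; eauto.
Qed.

Lemma EP (m : R -> Prop) x y : is_open m -> m x -> ~ m y -> x < y ->
  exists b, x <= b <= y /\ ~ m b /\ forall e, e > 0 -> exists z, m z /\ Rabs (z - b) < e.
Proof.
  intros Ho Hx Hy Hxy.
  set (E := fun z => m z /\ z <= y).
  assert (HB : bound E) by (exists y; intros z [_ Hz]; auto).
  assert (HE : exists z, E z) by (exists x; split; auto; lra).
  destruct (completeness E HB HE) as [b [Hub Hlub]].
  assert (Hxb : x <= b) by (apply Hub; split; auto; lra).
  assert (Hby : b <= y) by (apply Hlub; intros z [_ Hz]; auto).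
  exists b. split; [lra|]. split.
  - intros Hb. destruct (Ho b Hb) as [e [He H]].
    assert (b <> y) by (intro; subst; auto).
    set (z := b + Rmin e (y - b) / 2).
    pose proof (Rmin_l e (y-b)). pose proof (Rmin_r e (y-b)).
    assert (Hpos : Rmin e (y - b) > 0) by (apply Rmin_pos; lra).
    assert (HEz : E z).
    { split; [apply H|]; unfold z; [apply Rabs_def1; lra | lra]. }
    specialize (Hub z HEz). unfold z in Hub. lra.
  - intros e He. apply NNPP. intros Hn.
    assert (b <= b - e); [|lra].
    apply Hlub. intros z [Hz Hzy].
    assert (z <= b) by (apply Hub; split; auto).
    destruct (Rle_dec z (b - e)); auto. exfalso. apply Hn. exists z. split; auto.
    apply Rabs_def1; lra.
Qed.

Lemma EP_left (m : R -> Prop) x y : is_open m -> m x -> ~ m y -> y < x ->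
  exists b, y <= b <= x /\ ~ m b /\ forall e, e > 0 -> exists z, m z /\ Rabs (z - b) < e.
Proof.
  intros Ho Hx Hy Hxy.
  destruct (EP (fun z => m (- z)) (- x) (- y)) as [b [Hb1 [Hb2 Hb3]]].
  - intros z Hz. destruct (Ho _ Hz) as [e [He H]]. exists e; split; auto.
    intros w Hw. apply H. replace (- w - - z) with (- (w - z)) by ring.
    rewrite Rabs_Ropp; auto.
  - rewrite Ropp_involutive; auto.
  - rewrite Ropp_involutive; auto.
  - lra.
  - exists (- b). split; [lra|]. split; auto.
    intros e He. destruct (Hb3 e He) as [z [Hz1 Hz2]]. exists (- z). split; auto.
    replace (- z - - b) with (- (z - b)) by ring. rewrite Rabs_Ropp; auto.
Qed.

Definition sincl (A B : R -> Prop) : Prop := (forall z, A z -> B z) /\ exists z, B z /\ ~ A z.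

Lemma part1 G : is_subgroup G -> fin_gen G ->
  forall x, crs G x ->
     exists J1 J2, two_chain J1 J2 /\ comp_of_elt G J1 /\ comp_of_elt G J2 /\
                   (J1 x \/ J2 x).
Proof.
  intros HG [S [HSG HGS]] x [J [HJc [HJx Hnot]]].
  assert (HJ := HJc). destruct HJ as [_ [HJI [HJS HJM]]].
  assert (Hhom : forall s, In s S -> homeo_plus s) by (intros; apply HG; auto).
  destruct (exists_moving G S x HGS (HJS x HJx)) as [s0 [Hs0 Hs0x]].
  destruct (maxel sincl) with (l := map (fun s => seg (supp s) x) S)
     (a := seg (supp s0) x) as [m [Hm [Hle Hmax]]].
  - intros a b c [H1 [z [H2 H3]]] [H4 _]. split; eauto.
  - intros a [_ [z [H1 H2]]]; auto.
  - apply (in_map (fun s => seg (supp s) x)); auto.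
  - apply in_map_iff in Hm. destruct Hm as [s' [Hm Hs']]. subst m.
    assert (Hmx : seg (supp s') x x).
    { destruct Hle as [<-|[H _]]; [apply seg_refl; auto| apply H; apply seg_refl; auto]. }
    assert (Hs'x : supp s' x) by (eapply seg_sub; eauto).
    set (m := seg (supp s') x) in *.
    assert (Hmc : is_component (supp s') m) by (apply seg_component; auto).
    assert (Hmo : is_open m).
    { apply seg_open, supp_open. apply Hhom; auto. }
    assert (HmJ : forall z, m z -> J z).
    { apply HJM; auto. apply seg_interval. intros z Hz. exists s'. split; auto.
      eapply seg_sub; eauto. exists x; split; auto. }
    assert (Hy : exists y, J y /\ ~ m y).
    { apply NNPP; intros Hn. apply Hnot. exists s'. split; auto.
      apply comp_ext with m; auto. intros z; split; auto.
      intros Hz. apply NNPP; intros Hz'. apply Hn; eauto. }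
    destruct Hy as [y [HyJ Hym]].
    assert (Hb : exists b, J b /\ ~ m b /\
              forall e, e > 0 -> exists z, m z /\ Rabs (z - b) < e).
    { destruct (Rtotal_order x y) as [Hlt|[Heq|Hgt]].
      - destruct (EP m x y Hmo Hmx Hym Hlt) as [b [Hb1 [Hb2 Hb3]]].
        exists b; split; auto. apply (HJI x b y); auto.
      - subst; contradiction.
      - destruct (EP_left m x y Hmo Hmx Hym Hgt) as [b [Hb1 [Hb2 Hb3]]].
        exists b; split; auto. apply (HJI y b x); auto. }
    destruct Hb as [b [HbJ [Hbm Hbc]]].
    destruct (exists_moving G S b HGS (HJS b HbJ)) as [s'' [Hs'' Hs''b]].
    set (I' := seg (supp s'') b).
    assert (HIc : is_component (supp s'') I') by (apply seg_component; auto).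
    assert (HIo : is_open I').
    { apply seg_open, supp_open. apply Hhom; auto. }
    assert (HIb : I' b) by (apply seg_refl; auto).
    exists m, I'. split; [|split; [|split]].
    + split; [split; [apply seg_interval|auto]|].
      split; [split; [apply seg_interval|auto]|].
      split; [|split].
      * destruct (HIo b HIb) as [e [He H]]. destruct (Hbc e He) as [z [Hz1 Hz2]].
        exists z; split; auto.
      * apply NNPP; intros Hn.
        assert (HmI : forall z, m z -> I' z).
        { intros z Hz. apply NNPP; intros Hz'. apply Hn; eauto. }
        assert (HIx : I' x) by auto.
        apply (Hmax (seg (supp s'') x)).
        { apply (in_map (fun s => seg (supp s) x)); auto. }
        split.
        { intros z Hz. apply (comp_seg _ _ _ HIc HIx). auto. }
        exists b. split; auto. apply (comp_seg _ _ _ HIc HIx); auto.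
      * exists b; split; auto.
    + exists s'; split; auto.
    + exists s''; split; auto.
    + left; auto.
Qed.

Definition incr (k : R -> R) := forall a b, a < b -> k a < k b.

Lemma incr_le k a b : incr k -> a <= b -> k a <= k b.
Proof. intros H Hab. destruct (Req_dec a b) as [->|]; [lra|]. left; apply H; lra. Qed.

Lemma finv_r k y : homeo_plus k -> k (finv k y) = y.
Proof.
  intros [_ [_ Hs]]. unfold finv. apply (epsilon_spec (inhabits 0) (fun x => k x = y)).
  apply Hs.
Qed.

Lemma incr_inj k a b : incr k -> k a = k b -> a = b.
Proof.
  intros H E. destruct (Rtotal_order a b) as [h|[h|h]]; auto;
  apply H in h; lra.
Qed.

Lemma finv_le_fix k c z : homeo_plus k -> k c = c -> z <= c -> finv k z <= c.
Proof.
  intros Hk Hc Hz. destruct (Rle_dec (finv k z) c) as [h|h]; auto.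
  exfalso. destruct Hk as [H1 [H2 H3]].
  assert (k c < k (finv k z)) by (apply H2; lra).
  rewrite finv_r in H by (split; auto). lra.
Qed.

Lemma finv_ge_fix k c z : homeo_plus k -> k c = c -> c <= z -> c <= finv k z.
Proof.
  intros Hk Hc Hz. destruct (Rle_dec c (finv k z)) as [h|h]; auto.
  exfalso. destruct Hk as [H1 [H2 H3]].
  assert (k (finv k z) < k c) by (apply H2; lra).
  rewrite finv_r in H by (split; auto). lra.
Qed.

Lemma iter_le_fix (k : R -> R) c : (forall z, z <= c -> k z <= c) ->
  forall n z, z <= c -> Nat.iter n k z <= c.
Proof. intros H n; induction n; intros z Hz; simpl; auto. Qed.

Lemma iter_ge_fix (k : R -> R) c : (forall z, c <= z -> c <= k z) ->
  forall n z, c <= z -> c <= Nat.iter n k z.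
Proof. intros H n; induction n; intros z Hz; simpl; auto. Qed.

Lemma zpow_le_fix k c z n : homeo_plus k -> k c = c -> z <= c -> zpow k n z <= c.
Proof.
  intros Hk Hc Hz. destruct n; simpl; auto; apply iter_le_fix; auto.
  - intros w Hw. rewrite <- Hc. apply incr_le; auto. unfold incr; apply Hk.
  - intros w Hw. apply finv_le_fix; auto.
Qed.

Lemma zpow_ge_fix k c z n : homeo_plus k -> k c = c -> c <= z -> c <= zpow k n z.
Proof.
  intros Hk Hc Hz. destruct n; simpl; auto; apply iter_ge_fix; auto.
  - intros w Hw. rewrite <- Hc. apply incr_le; auto. unfold incr; apply Hk.
  - intros w Hw. apply finv_ge_fix; auto.
Qed.

Lemma zpow_nat k n z : zpow k (Z.of_nat n) z = Nat.iter n k z.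
Proof. destruct n; simpl; auto. rewrite SuccNat2Pos.id_succ. auto. Qed.

Lemma UpCore k y t : ceps k -> incr k -> y < t -> k y > y ->
  (forall z, y <= z <= t -> k z <> z) -> exists N, Nat.iter N k y > t.
Proof.
  intros Hc Hi Hyt Hky Hnf. apply NNPP; intros Hn.
  assert (Hb : forall N, Nat.iter N k y <= t).
  { intros N. destruct (Rle_dec (Nat.iter N k y) t); auto. exfalso; apply Hn; exists N; lra. }
  set (E := fun z => exists N, z = Nat.iter N k y).
  assert (HB : bound E) by (exists t; intros z [N ->]; auto).
  assert (HE : exists z, E z) by (exists y; exists 0%nat; auto).
  destruct (completeness E HB HE) as [l [Hub Hlub]].
  assert (Hit : forall N, Nat.iter N k y <= l) by (intros N; apply Hub; exists N; auto).
  assert (Hyl : y <= l) by apply (Hit 0%nat).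
  assert (Hlt : l <= t) by (apply Hlub; intros z [N ->]; auto).
  assert (H1 : l <= k l).
  { apply Hlub. intros z [N ->]. destruct N as [|N]; simpl.
    - pose proof (incr_le k y l Hi Hyl). lra.
    - apply incr_le; auto. }
  assert (H2 : k l <= l).
  { destruct (Rle_dec (k l) l) as [h|h]; auto. exfalso.
    destruct (Hc l (k l - l)) as [alp [Ha H]]; [lra|].
    assert (Hex : exists N, Nat.iter N k y > l - alp).
    { apply NNPP; intros Hn'. assert (l <= l - alp); [|lra].
      apply Hlub. intros z [N ->]. destruct (Rle_dec (Nat.iter N k y) (l - alp)); auto.
      exfalso; apply Hn'; exists N; lra. }
    destruct Hex as [N HN]. pose proof (Hit (S N)) as HS. specialize (Hit N).
    simpl in HS. specialize (H (Nat.iter N k y)).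
    assert (Rabs (Nat.iter N k y - l) < alp) by (apply Rabs_def1; lra).
    specialize (H H0). apply Rabs_def2 in H. lra. }
  apply (Hnf l); lra.
Qed.

Lemma iter_refl k N y : Nat.iter N (fun z => - k (- z)) (- y) = - Nat.iter N k y.
Proof. induction N; simpl; auto. rewrite IHN, Ropp_involutive. auto. Qed.

Lemma DownCore k y t : ceps k -> incr k -> t < y -> k y < y ->
  (forall z, t <= z <= y -> k z <> z) -> exists N, Nat.iter N k y < t.
Proof.
  intros Hc Hi Hyt Hky Hnf.
  destruct (UpCore (fun z => - k (- z)) (- y) (- t)) as [N HN].
  - intros z eps He. destruct (Hc (- z) eps He) as [alp [Ha H]]. exists alp; split; auto.
    intros w Hw. replace (- k (- w) - - k (- z)) with (- (k (- w) - k (- z))) by ring.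
    rewrite Rabs_Ropp. apply H. replace (- w - - z) with (- (w - z)) by ring.
    rewrite Rabs_Ropp; auto.
  - intros a b Hab. apply Ropp_lt_contravar. apply Hi. lra.
  - lra.
  - rewrite Ropp_involutive. lra.
  - intros z Hz E. apply (Hnf (- z)); [lra|]. lra.
  - exists N. rewrite iter_refl in HN. lra.
Qed.

Lemma iter_mono_up k y : incr k -> k y > y -> forall n m, (n <= m)%nat ->
  Nat.iter n k y <= Nat.iter m k y.
Proof.
  intros Hi Hk.
  assert (HS : forall n, Nat.iter n k y <= Nat.iter (S n) k y).
  { induction n; simpl; [lra|]. apply incr_le; auto. }
  intros n m Hnm. induction Hnm; [lra|]. eapply Rle_trans; eauto.
Qed.

Lemma iter_mono_down k y : incr k -> k y < y -> forall n m, (n <= m)%nat ->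
  Nat.iter m k y <= Nat.iter n k y.
Proof.
  intros Hi Hk.
  assert (HS : forall n, Nat.iter (S n) k y <= Nat.iter n k y).
  { induction n; simpl; [lra|]. apply incr_le; auto. }
  intros n m Hnm. induction Hnm; [lra|]. eapply Rle_trans; eauto.
Qed.

Lemma choose_dir G k y : is_subgroup G -> G k -> k y <> y ->
  (exists k', G k' /\ k' y > y /\ forall z, k' z = z <-> k z = z) /\
  (exists k', G k' /\ k' y < y /\ forall z, k' z = z <-> k z = z).
Proof.
  intros HG Hk Hy. destruct HG as [Hh [_ [_ Hinv]]].
  destruct (Hinv k Hk) as [h [Gh Hhk]].
  assert (Hfix : forall z, h z = z <-> k z = z).
  { intros z; split; intros E.
    - destruct (Hhk z) as [_ H2]. rewrite E in H2; auto.
    - destruct (Hhk z) as [H1 _]. rewrite E in H1; auto. }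
  destruct (Hh k Hk) as [_ [Ik _]].
  destruct (Rtotal_order (k y) y) as [Hlt|[Heq|Hgt]]; [|contradiction|].
  - split; [|exists k; split; auto; split; auto; tauto].
    exists h. split; auto. split; auto.
    destruct (Rle_dec (h y) y) as [h1|h1]; [|lra]. exfalso.
    pose proof (incr_le k _ _ Ik h1). destruct (Hhk y) as [_ E]. lra.
  - split; [exists k; split; auto; split; auto; tauto|].
    exists h. split; auto. split; auto.
    destruct (Rle_dec y (h y)) as [h1|h1]; [|lra]. exfalso.
    pose proof (incr_le k _ _ Ik h1). destruct (Hhk y) as [_ E]. lra.
Qed.

Lemma comp_step k k' K z : is_component (supp k) K -> (forall w, k' w = w <-> k w = w) ->
  incr k' -> K z -> K (k' z).
Proof.
  intros HK Hf Hi Hz. apply (comp_seg _ _ _ HK Hz).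
  assert (Hsz : supp k z) by (destruct HK as [_ [_ [HS _]]]; auto).
  intros t Ht Ekt. apply Hf in Ekt.
  assert (k' z <> z) by (intro E; apply Hf in E; auto).
  destruct (Rtotal_order z t) as [h|[h|h]].
  - pose proof (Hi _ _ h). lra.
  - subst. auto.
  - pose proof (Hi _ _ h). lra.
Qed.

Lemma gap k K w u : is_component (supp k) K -> K w -> ~ K u ->
  exists c, (u <= c <= w \/ w <= c <= u) /\ k c = c.
Proof.
  intros HK Hw Hu. apply NNPP; intros Hn. apply Hu.
  apply (comp_seg _ _ _ HK Hw). intros t Ht E. apply Hn. exists t. split; auto. lra.
Qed.

Lemma in_comp_supp k K z : is_component (supp k) K -> K z -> k z <> z.
Proof. intros [_ [_ [HS _]]] H. apply HS; auto. Qed.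

Lemma comp_interval X K : is_component X K -> is_interval K.
Proof. intros [_ [H _]]; auto. Qed.

Lemma homeo_of G k : is_subgroup G -> G k -> homeo_plus k.
Proof. intros [H _] Hk; auto. Qed.

Lemma iter_inv G U k : invariant G U -> G k -> forall N z, U z -> U (Nat.iter N k z).
Proof. intros HU Hk N; induction N; intros z Hz; simpl; auto. Qed.

Lemma iter_comp k k' K : is_component (supp k) K -> (forall w, k' w = w <-> k w = w) ->
  incr k' -> forall N z, K z -> K (Nat.iter N k' z).
Proof. intros HK Hf Hi N; induction N; intros z Hz; simpl; auto. eapply comp_step; eauto. Qed.

Lemma OrbUp G k K y t : is_subgroup G -> G k -> is_component (supp k) K ->
  K y -> K t -> y < t ->
  exists z, K z /\ z > t /\ forall U, invariant G U -> U y -> U z.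
Proof.
  intros HG Hk HK Hy Ht Hyt.
  destruct (choose_dir G k y HG Hk (in_comp_supp _ _ _ HK Hy)) as [[k' [Gk' [Hk'y Hf]]] _].
  destruct (homeo_of G k' HG Gk') as [Hc [Hi _]].
  destruct (UpCore k' y t (cont_ceps _ Hc) Hi Hyt Hk'y) as [N HN].
  - intros z Hz E. apply Hf in E. apply (in_comp_supp _ _ _ HK (comp_interval _ _ HK y z t Hy Ht Hz)); auto.
  - exists (Nat.iter N k' y). split; [eapply iter_comp; eauto|]. split; auto.
    intros U HU HUy. eapply iter_inv; eauto.
Qed.

Lemma OrbDown G k K y t : is_subgroup G -> G k -> is_component (supp k) K ->
  K y -> K t -> t < y ->
  exists z, K z /\ z < t /\ forall U, invariant G U -> U y -> U z.
Proof.
  intros HG Hk HK Hy Ht Hyt.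
  destruct (choose_dir G k y HG Hk (in_comp_supp _ _ _ HK Hy)) as [_ [k' [Gk' [Hk'y Hf]]]].
  destruct (homeo_of G k' HG Gk') as [Hc [Hi _]].
  destruct (DownCore k' y t (cont_ceps _ Hc) Hi Hyt Hk'y) as [N HN].
  - intros z Hz E. apply Hf in E. apply (in_comp_supp _ _ _ HK (comp_interval _ _ HK t z y Ht Hy Hz)); auto.
  - exists (Nat.iter N k' y). split; [eapply iter_comp; eauto|]. split; auto.
    intros U HU HUy. eapply iter_inv; eauto.
Qed.

Lemma CrossCore G U h1 h2 L Rr u w v : is_subgroup G -> G h1 -> G h2 ->
  is_component (supp h1) L -> is_component (supp h2) Rr ->
  L u -> L w -> Rr w -> Rr v -> ~ Rr u -> ~ L v -> u < w -> w < v ->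
  U u -> U w -> U v -> exists f g, G f /\ G g /\ crossed_on U f g.
Proof.
  intros HG G1 G2 HL HR Lu Lw Rw Rv Ru Lv Huw Hwv Uu Uw Uv.
  destruct (choose_dir G h1 u HG G1 (in_comp_supp _ _ _ HL Lu)) as [[f [Gf [Hfu Hff]]] _].
  destruct (choose_dir G h2 v HG G2 (in_comp_supp _ _ _ HR Rv)) as [_ [g [Gg [Hgv Hgf]]]].
  pose proof (homeo_of G f HG Gf) as Hf. pose proof (homeo_of G g HG Gg) as Hg.
  destruct (gap h2 Rr w u HR Rw Ru) as [c2 [Hc2 E2]].
  destruct (gap h1 L w v HL Lw Lv) as [c1 [Hc1 E1]].
  assert (c2 <> w) by (intro; subst; apply (in_comp_supp _ _ _ HR Rw); auto).
  assert (c1 <> w) by (intro; subst; apply (in_comp_supp _ _ _ HL Lw); auto).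
  apply Hgf in E2. apply Hff in E1.
  exists f, g. split; auto. split; auto.
  exists u, w, v. split; auto. split; auto. split; auto. split; [lra|]. split.
  - intros n. split.
    + pose proof (zpow_le_fix g c2 u n Hg E2 ltac:(lra)). lra.
    + pose proof (zpow_ge_fix f c1 v n Hf E1 ltac:(lra)). lra.
  - destruct Hf as [Cf [If _]]. destruct Hg as [Cg [Ig _]].
    destruct (UpCore f u w (cont_ceps _ Cf) If Huw Hfu) as [N1 HN1].
    { intros z Hz E. apply Hff in E.
      apply (in_comp_supp _ _ _ HL (comp_interval _ _ HL u z w Lu Lw Hz)); auto. }
    destruct (DownCore g v w (cont_ceps _ Cg) Ig Hwv Hgv) as [N2 HN2].
    { intros z Hz E. apply Hgf in E.
      apply (in_comp_supp _ _ _ HR (comp_interval _ _ HR w z v Rw Rv Hz)); auto. }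
    exists (Z.of_nat (N1 + N2)). rewrite !zpow_nat. split.
    + pose proof (iter_mono_down g v Ig Hgv N2 (N1 + N2) ltac:(lia)). lra.
    + pose proof (iter_mono_up f u If Hfu N1 (N1 + N2) ltac:(lia)). lra.
Qed.

Lemma Part2core G U h1 h2 L Rr q1 p q2 x : is_subgroup G -> G h1 -> G h2 ->
  is_component (supp h1) L -> is_component (supp h2) Rr ->
  q1 < p -> p < q2 -> L q1 -> L p -> ~ Rr q1 -> Rr p -> Rr q2 -> ~ L q2 ->
  invariant G U -> conradian_on G U -> U x -> (L x \/ Rr x) -> False.
Proof.
  intros HG G1 G2 HL HR H1 H2 Lq1 Lp Rq1 Rp Rq2 Lq2 HU HC Ux Hx.
  pose proof (comp_interval _ _ HL) as IL. pose proof (comp_interval _ _ HR) as IR.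
  assert (Hw : exists w, L w /\ Rr w /\ U w).
  { destruct (classic (L x)) as [Lx|Lx]; destruct (classic (Rr x)) as [Rx|Rx].
    - exists x; auto.
    - assert (x < p).
      { destruct (Rtotal_order x p) as [h|[h|h]]; auto; [subst; contradiction|].
        exfalso. destruct (Rle_dec q2 x).
        + apply Lq2. apply (IL p q2 x); auto; lra.
        + apply Rx. apply (IR p x q2); auto; lra. }
      destruct (OrbUp G h1 L x p HG G1 HL Lx Lp H) as [z [Lz [Hz HUz]]].
      exists z. split; auto. split; [|apply HUz; auto].
      destruct (Rle_dec q2 z).
      + exfalso. apply Lq2. apply (IL p q2 z); auto; lra.
      + apply (IR p z q2); auto; lra.
    - assert (p < x).
      { destruct (Rtotal_order x p) as [h|[h|h]]; auto; [|subst; contradiction].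
        exfalso. destruct (Rle_dec x q1).
        + apply Rq1. apply (IR x q1 p); auto; lra.
        + apply Lx. apply (IL q1 x p); auto; lra. }
      destruct (OrbDown G h2 Rr x p HG G2 HR Rx Rp H) as [z [Rz [Hz HUz]]].
      exists z. split; [|split; auto; apply HUz; auto].
      destruct (Rle_dec z q1).
      + exfalso. apply Rq1. apply (IR z q1 p); auto; lra.
      + apply (IL q1 z p); auto; lra.
    - destruct Hx; contradiction. }
  destruct Hw as [w [Lw [Rw Uw]]].
  assert (Hq1w : q1 < w).
  { destruct (Rle_dec w q1); [|lra]. exfalso.
    destruct (Req_dec w q1); [subst; contradiction|].
    apply Rq1. apply (IR w q1 p); auto; lra. }
  assert (Hwq2 : w < q2).
  { destruct (Rle_dec q2 w); [|lra]. exfalso.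
    destruct (Req_dec w q2); [subst; contradiction|].
    apply Lq2. apply (IL p q2 w); auto; lra. }
  destruct (OrbDown G h1 L w q1 HG G1 HL Lw Lq1 Hq1w) as [u [Lu [Hu HUu]]].
  destruct (OrbUp G h2 Rr w q2 HG G2 HR Rw Rq2 Hwq2) as [v [Rv [Hv HUv]]].
  assert (Ru : ~ Rr u) by (intro Ru; apply Rq1; apply (IR u q1 w); auto; lra).
  assert (Lv : ~ L v) by (intro Lv; apply Lq2; apply (IL w q2 v); auto; lra).
  destruct (CrossCore G U h1 h2 L Rr u w v HG G1 G2 HL HR Lu Lw Rw Rv Ru Lv
     ltac:(lra) ltac:(lra) (HUu U HU Uw) Uw (HUv U HU Uw)) as [f [g [Gf [Gg Hc]]]].
  exact (HC f g Gf Gg Hc).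
Qed.

Theorem lemma2p9 (G : (R -> R) -> Prop) :
  is_subgroup G -> fin_gen G ->
  (forall x, crs G x ->
     exists J1 J2, two_chain J1 J2 /\ comp_of_elt G J1 /\ comp_of_elt G J2 /\
                   (J1 x \/ J2 x)) /\
  (forall U : R -> Prop, invariant G U -> conradian_on G U ->
     forall x, U x -> ~ crs G x).
Proof.
  intros HG HF. split; [apply part1; auto|].
  intros U HU HC x Ux Hcrs.
  destruct (part1 G HG HF x Hcrs) as [J1 [J2 [[[I1 _] [[I2 _] [[p [P1 P2]] [[a [A1 A2]] [b [B1 B2]]]]]] [[h1 [G1 C1]] [[h2 [G2 C2]] Hx]]]]].
  destruct (Rtotal_order a p) as [h|[h|h]]; [| subst; contradiction |].
  - assert (p < b).
    { destruct (Rtotal_order b p) as [h'|[h'|h']]; auto; [|subst; contradiction].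
      exfalso. destruct (Rle_dec a b).
      + apply B2. apply (I1 a b p); auto; lra.
      + apply A2. apply (I2 b a p); auto; lra. }
    eapply (Part2core G U h1 h2 J1 J2 a p b x); eauto.
  - assert (b < p).
    { destruct (Rtotal_order b p) as [h'|[h'|h']]; auto; [subst; contradiction|].
      exfalso. destruct (Rle_dec a b).
      + apply A2. apply (I2 p a b); auto; lra.
      + apply B2. apply (I1 p b a); auto; lra. }
    eapply (Part2core G U h2 h1 J2 J1 b p a x); eauto. tauto.
Qed.
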